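(* Fix $R\in\mathbb R$ and $t_1<t_2$. For all $\xi,\zeta\in\mathbb R$ and $u,v\le0$, $$\int_{\mathbb R_-}du\,\Phi^\xi_{t_1}(u)T^0_{t_1,t_2}(u,v)=\Phi^\xi_{t_2}(v),\qquad\int_{\mathbb R_-}dv\,T^0_{t_1,t_2}(u,v)\Psi^\zeta_{t_2}(v)=\Psi^\zeta_{t_1}(u).$$
   Context: $\operatorname{Ai}^{(s)}(x)=e^{2s^3/3+xs}\operatorname{Ai}(s^2+x)$; $\Phi_t^\xi(u)=\operatorname{Ai}^{(t)}(R+\xi+u)-\operatorname{Ai}^{(t)}(R+\xi-u)$; $\Psi_t^\zeta(u)=\operatorname{Ai}^{(-t)}(R+\zeta+u)-\operatorname{Ai}^{(-t)}(R+\zeta-u)$. $T^0_{t_1,t_2}(u,v)=\phi_{t_2-t_1}(u,v)-\phi_{t_2-t_1}(u,-v)$ for $u,v\le0$, with $\phi_t(x,y)=(4\pi t)^{-1/2}e^{-(x-y)^2/(4t)}$; this is the transition density of a Brownian motion with diffusion coefficient 2 killed when it exceeds level $0$. *)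

(* Defs.v *)
From Stdlib Require Import Reals.
From Coquelicot Require Import Coquelicot.
Open Scope R_scope.

Definition Ai (x : R) : R :=
  / PI * real (Lim (fun b => RInt (fun t => cos (t ^ 3 / 3 + x * t)) 0 b) p_infty).

Definition Ai_s (s x : R) : R := exp (2 * s ^ 3 / 3 + x * s) * Ai (s ^ 2 + x).

(* Phi_t^xi(u) and Psi_t^zeta(u); Rc is the fixed real parameter R of the paper *)
Definition Phi (Rc xi t u : R) : R := Ai_s t (Rc + xi + u) - Ai_s t (Rc + xi - u).
Definition Psi (Rc zeta t u : R) : R := Ai_s (- t) (Rc + zeta + u) - Ai_s (- t) (Rc + zeta - u).

Definition phi_heat (t x y : R) : R := / sqrt (4 * PI * t) * exp (- (x - y) ^ 2 / (4 * t)).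

Definition T0 (t1 t2 u v : R) : R := phi_heat (t2 - t1) u v - phi_heat (t2 - t1) u (- v).

(* Main.v *)
Require Import Defs.
From Stdlib Require Import Reals Lra Psatz ZArith.
From Coquelicot Require Import Coquelicot.
Open Scope R_scope.

Ltac rfix := match goal with |- @eq _ ?a ?b => change (@eq R a b) end.

Lemma ex_RInt_extR (f g : R -> R) a b : (forall x, f x = g x) -> ex_RInt f a b -> ex_RInt g a b.
Proof. intros E H. assert (f = g) by (apply FunctionalExtensionality.functional_extensionality; auto). subst; auto. Qed.

Lemma RInt_extR (f g : R -> R) a b : (forall x, f x = g x) -> RInt f a b = RInt g a b.
Proof. intros E. assert (f = g) by (apply FunctionalExtensionality.functional_extensionality; auto). subst; auto. Qed.

Lemma RInt_plusR (f g : R -> R) a b : ex_RInt f a b -> ex_RInt g a b ->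
  RInt (fun x => f x + g x) a b = RInt f a b + RInt g a b.
Proof. intros H H0; exact (RInt_plus (V:=R_CompleteNormedModule) f g a b H H0). Qed.

Lemma RInt_minusR (f g : R -> R) a b : ex_RInt f a b -> ex_RInt g a b ->
  RInt (fun x => f x - g x) a b = RInt f a b - RInt g a b.
Proof. intros H H0; exact (RInt_minus (V:=R_CompleteNormedModule) f g a b H H0). Qed.

Lemma RInt_scalR (f : R -> R) c a b : ex_RInt f a b ->
  RInt (fun x => c * f x) a b = c * RInt f a b.
Proof. intros H; exact (RInt_scal (V:=R_CompleteNormedModule) f a b c H). Qed.

Lemma RInt_ChaslesR (f : R -> R) a b c : ex_RInt f a b -> ex_RInt f b c ->
  RInt f a b + RInt f b c = RInt f a c.
Proof. intros H H0; exact (RInt_Chasles (V:=R_CompleteNormedModule) f a b c H H0). Qed.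

Lemma RInt_swapR (f : R -> R) a b : ex_RInt f a b -> RInt f b a = - RInt f a b.
Proof. intros H; rewrite <- (opp_RInt_swap (V:=R_CompleteNormedModule)) by exact H. reflexivity. Qed.

Lemma ex_RInt_plusR (f g : R -> R) a b : ex_RInt f a b -> ex_RInt g a b -> ex_RInt (fun x => f x + g x) a b.
Proof. intros H H0; exact (ex_RInt_plus (V:=R_NormedModule) f g a b H H0). Qed.
Lemma ex_RInt_minusR (f g : R -> R) a b : ex_RInt f a b -> ex_RInt g a b -> ex_RInt (fun x => f x - g x) a b.
Proof. intros H H0; exact (ex_RInt_minus (V:=R_NormedModule) f g a b H H0). Qed.
Lemma ex_RInt_scalR (f : R -> R) c a b : ex_RInt f a b -> ex_RInt (fun x => c * f x) a b.
Proof. intros H; exact (ex_RInt_scal (V:=R_NormedModule) f a b c H). Qed.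

Lemma RInt_abs_le f h a b : a <= b -> ex_RInt f a b -> ex_RInt h a b ->
  (forall x, a <= x <= b -> Rabs (f x) <= h x) -> Rabs (RInt f a b) <= RInt h a b.
Proof.
  intros Hab Hf Hh H.
  eapply Rle_trans. apply abs_RInt_le; auto.
  apply RInt_le; auto. apply ex_RInt_norm in Hf. exact Hf.
  intros x Hx; apply H; lra.
Qed.

Lemma RInt_ge0 h a b : a <= b -> ex_RInt h a b -> (forall x, a <= x <= b -> 0 <= h x) -> 0 <= RInt h a b.
Proof. intros; apply RInt_ge_0; auto. intros; apply H1; lra. Qed.

Definition IR (f : R -> R) (L : R) : Prop :=
  (forall a b, ex_RInt f a b) /\
  (forall eps, 0 < eps -> exists M, forall a b, a <= -M -> M <= b -> Rabs (RInt f a b - L) < eps).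

Lemma IR_unique f L1 L2 : IR f L1 -> IR f L2 -> L1 = L2.
Proof.
  intros [_ H1] [_ H2].
  apply Rle_antisym; apply Rnot_lt_le; intro Hlt.
  - destruct (H1 ((L1 - L2)/2)) as [M1 HM1]; [lra|].
    destruct (H2 ((L1 - L2)/2)) as [M2 HM2]; [lra|].
    set (M := Rmax (Rabs M1) (Rabs M2)).
    assert (A1 : -M <= - M1) by (unfold M; generalize (Rmax_l (Rabs M1) (Rabs M2)) (Rle_abs M1); lra).
    assert (A2 : -M <= - M2) by (unfold M; generalize (Rmax_r (Rabs M1) (Rabs M2)) (Rle_abs M2); lra).
    specialize (HM1 (-M) M A1 ltac:(lra)). specialize (HM2 (-M) M A2 ltac:(lra)).
    apply Rabs_def2 in HM1; apply Rabs_def2 in HM2; lra.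
  - destruct (H1 ((L2 - L1)/2)) as [M1 HM1]; [lra|].
    destruct (H2 ((L2 - L1)/2)) as [M2 HM2]; [lra|].
    set (M := Rmax (Rabs M1) (Rabs M2)).
    assert (A1 : -M <= - M1) by (unfold M; generalize (Rmax_l (Rabs M1) (Rabs M2)) (Rle_abs M1); lra).
    assert (A2 : -M <= - M2) by (unfold M; generalize (Rmax_r (Rabs M1) (Rabs M2)) (Rle_abs M2); lra).
    specialize (HM1 (-M) M A1 ltac:(lra)). specialize (HM2 (-M) M A2 ltac:(lra)).
    apply Rabs_def2 in HM1; apply Rabs_def2 in HM2; lra.
Qed.

Lemma IR_ext f g L : (forall x, f x = g x) -> IR f L -> IR g L.
Proof.
  intros E [H1 H2]. assert (Efg : f = g) by (apply FunctionalExtensionality.functional_extensionality; auto).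
  subst; split; auto.
Qed.

Lemma IR_scal f c L : IR f L -> IR (fun x => c * f x) (c * L).
Proof.
  intros [H1 H2]; split.
  - intros; apply ex_RInt_scalR; auto.
  - intros eps Heps.
    destruct (H2 (eps / (Rabs c + 1))) as [M HM].
    { apply Rdiv_lt_0_compat; auto. generalize (Rabs_pos c); lra. }
    exists M; intros a b Ha Hb. rewrite RInt_scalR; auto.
    replace (c * RInt f a b - c * L) with (c * (RInt f a b - L)) by ring.
    rewrite Rabs_mult. specialize (HM a b Ha Hb).
    assert (0 < Rabs c + 1) by (generalize (Rabs_pos c); lra).
    apply Rle_lt_trans with ((Rabs c + 1) * Rabs (RInt f a b - L)).
    apply Rmult_le_compat_r. apply Rabs_pos. lra.
    apply Rmult_lt_reg_l with (/ (Rabs c + 1)). apply Rinv_0_lt_compat; auto.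
    rewrite <- Rmult_assoc, Rinv_l by lra. rewrite Rmult_1_l.
    unfold Rdiv in HM. rewrite Rmult_comm. exact HM.
Qed.

Lemma IR_plus f g Lf Lg : IR f Lf -> IR g Lg -> IR (fun x => f x + g x) (Lf + Lg).
Proof.
  intros [F1 F2] [G1 G2]; split.
  - intros; apply ex_RInt_plusR; auto.
  - intros eps Heps.
    destruct (F2 (eps/2)) as [M1 HM1]; [lra|].
    destruct (G2 (eps/2)) as [M2 HM2]; [lra|].
    exists (Rmax M1 M2); intros a b Ha Hb.
    rewrite RInt_plusR; auto.
    specialize (HM1 a b ltac:(generalize (Rmax_l M1 M2); lra) ltac:(generalize (Rmax_l M1 M2); lra)).
    specialize (HM2 a b ltac:(generalize (Rmax_r M1 M2); lra) ltac:(generalize (Rmax_r M1 M2); lra)).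
    apply Rabs_def2 in HM1; apply Rabs_def2 in HM2. apply Rabs_def1; lra.
Qed.

Lemma IR_opp f L : IR f L -> IR (fun x => - f x) (- L).
Proof.
  intros H. apply IR_ext with (fun x => -1 * f x). intros; ring.
  replace (-L) with (-1 * L) by ring. apply IR_scal; auto.
Qed.

Lemma IR_minus f g Lf Lg : IR f Lf -> IR g Lg -> IR (fun x => f x - g x) (Lf - Lg).
Proof.
  intros. apply IR_ext with (fun x => f x + - g x). intros; ring.
  apply IR_plus; auto. apply IR_opp; auto.
Qed.

Lemma IR_tail f h Lf Lh c a b : IR f Lf -> IR h Lh -> 0 <= c ->
  (forall x, Rabs (f x) <= c * h x) -> a <= b ->
  Rabs (Lf - RInt f a b) <= c * (Lh - RInt h a b).
Proof.
  intros [F1 F2] [H1 H2] Hc Hb Hab.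
  apply Rnot_lt_le; intro Hlt.
  set (d := Rabs (Lf - RInt f a b) - c * (Lh - RInt h a b)).
  assert (Hd : 0 < d) by (unfold d; lra).
  destruct (F2 (d / (2 * (c+1)))) as [M1 HM1].
  { apply Rdiv_lt_0_compat; lra. }
  destruct (H2 (d / (2 * (c+1)))) as [M2 HM2].
  { apply Rdiv_lt_0_compat; lra. }
  set (M := Rmax (Rmax (Rabs M1) (Rabs M2)) (Rmax (Rabs a) (Rabs b))).
  assert (HM1' : M1 <= M) by (unfold M; generalize (Rle_abs M1) (Rmax_l (Rabs M1) (Rabs M2)) (Rmax_l (Rmax (Rabs M1) (Rabs M2)) (Rmax (Rabs a) (Rabs b))); lra).
  assert (HM2' : M2 <= M) by (unfold M; generalize (Rle_abs M2) (Rmax_r (Rabs M1) (Rabs M2)) (Rmax_l (Rmax (Rabs M1) (Rabs M2)) (Rmax (Rabs a) (Rabs b))); lra).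
  assert (Ha' : Rabs a <= M) by (unfold M; generalize (Rmax_l (Rabs a) (Rabs b)) (Rmax_r (Rmax (Rabs M1) (Rabs M2)) (Rmax (Rabs a) (Rabs b))); lra).
  assert (Hb' : Rabs b <= M) by (unfold M; generalize (Rmax_r (Rabs a) (Rabs b)) (Rmax_r (Rmax (Rabs M1) (Rabs M2)) (Rmax (Rabs a) (Rabs b))); lra).
  assert (Ea : -M <= a) by (apply Rabs_le_between in Ha'; lra).
  assert (Eb : b <= M) by (apply Rabs_le_between in Hb'; lra).
  specialize (HM1 (-M) M ltac:(lra) ltac:(lra)).
  specialize (HM2 (-M) M ltac:(lra) ltac:(lra)).
  rewrite <- (RInt_ChaslesR f (-M) a M) in HM1 by auto.
  rewrite <- (RInt_ChaslesR f a b M) in HM1 by auto.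
  rewrite <- (RInt_ChaslesR h (-M) a M) in HM2 by auto.
  rewrite <- (RInt_ChaslesR h a b M) in HM2 by auto.
  assert (B1 : Rabs (RInt f (-M) a) <= c * RInt h (-M) a).
  { rewrite <- RInt_scalR by auto. apply RInt_abs_le; auto; try lra; apply ex_RInt_scalR; auto. }
  assert (B2 : Rabs (RInt f b M) <= c * RInt h b M).
  { rewrite <- RInt_scalR by auto. apply RInt_abs_le; auto; try lra; apply ex_RInt_scalR; auto. }
  apply Rabs_def2 in HM2.
  assert (Hq : (c + 1) * (d / (2 * (c + 1))) = d / 2) by (field; lra).
  set (del := d / (2 * (c + 1))) in *.
  assert (T : Rabs (Lf - RInt f a b) <= Rabs (RInt f (-M) a) + Rabs (RInt f b M) + Rabs (RInt f (- M) a + (RInt f a b + RInt f b M) - Lf)).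
  { replace (Lf - RInt f a b) with (RInt f (-M) a + RInt f b M - (RInt f (- M) a + (RInt f a b + RInt f b M) - Lf)) by ring.
    unfold Rminus at 1. eapply Rle_trans. apply Rabs_triang.
    rewrite Rabs_Ropp. apply Rplus_le_compat_r. apply Rabs_triang. }
  assert (Hdel : 0 < del) by (unfold del; apply Rdiv_lt_0_compat; lra).
  unfold d in Hq. nra.
Qed.

Lemma nat_above x : exists n : nat, x <= INR n.
Proof.
  destruct (archimed (Rabs x)) as [H1 H2].
  assert (Hz : (0 <= up (Rabs x))%Z).
  { apply le_IZR. generalize (Rabs_pos x); lra. }
  exists (Z.to_nat (up (Rabs x))). rewrite INR_IZR_INZ, Z2Nat.id by exact Hz.
  generalize (Rle_abs x); lra.
Qed.

Lemma IR_dom f h Lh : (forall a b, ex_RInt f a b) -> (forall x, Rabs (f x) <= h x) ->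
  IR h Lh -> exists L, IR f L.
Proof.
  intros Hf Hdom [H1 H2].
  set (S n := RInt f (- INR n) (INR n)).
  set (Sh n := RInt h (- INR n) (INR n)).
  assert (key : forall a b c d, c <= a -> a <= b -> b <= d ->
     Rabs (RInt f c d - RInt f a b) <= RInt h c d - RInt h a b).
  { intros a b c d Hca Hab Hbd.
    rewrite <- (RInt_ChaslesR f c a d), <- (RInt_ChaslesR f a b d) by auto.
    rewrite <- (RInt_ChaslesR h c a d), <- (RInt_ChaslesR h a b d) by auto.
    replace (RInt f c a + (RInt f a b + RInt f b d) - RInt f a b) with (RInt f c a + RInt f b d) by ring.
    replace (RInt h c a + (RInt h a b + RInt h b d) - RInt h a b) with (RInt h c a + RInt h b d) by ring.
    eapply Rle_trans. apply Rabs_triang.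
    apply Rplus_le_compat; apply RInt_abs_le; auto; intros; auto. }
  assert (HC : Cauchy_crit S).
  { intros eps Heps.
    destruct (H2 (eps/2)) as [M HM]; [lra|].
    destruct (nat_above M) as [N HN].
    exists N. intros n m Hn Hm.
    apply le_INR in Hn; apply le_INR in Hm.
    unfold Rdist, S.
    assert (P0 : 0 <= INR N) by apply pos_INR.
    destruct (Rle_dec (INR n) (INR m)).
    - rewrite <- Rabs_Ropp. replace (- (RInt f (- INR n) (INR n) - RInt f (- INR m) (INR m))) with
        (RInt f (- INR m) (INR m) - RInt f (- INR n) (INR n)) by ring.
      eapply Rle_lt_trans. apply key; lra.
      generalize (HM (- INR m) (INR m) ltac:(lra) ltac:(lra)) (HM (- INR n) (INR n) ltac:(lra) ltac:(lra)).
      intros A B; apply Rabs_def2 in A; apply Rabs_def2 in B; lra.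
    - eapply Rle_lt_trans. apply key; lra.
      generalize (HM (- INR m) (INR m) ltac:(lra) ltac:(lra)) (HM (- INR n) (INR n) ltac:(lra) ltac:(lra)).
      intros A B; apply Rabs_def2 in A; apply Rabs_def2 in B; lra. }
  destruct (Rcomplete.R_complete S HC) as [L HL].
  exists L. split; auto.
  intros eps Heps.
  destruct (H2 (eps/3)) as [M HM]; [lra|].
  exists (Rabs M). intros a b Ha Hb.
  generalize (Rle_abs M) (Rabs_pos M); intros.
  destruct (HL (eps/3)) as [N HN]; [lra|].
  destruct (nat_above (Rmax (INR N) (Rmax (-a) b))) as [n Hn].
  generalize (Rmax_l (INR N) (Rmax (-a) b)) (Rmax_r (INR N) (Rmax (-a) b)) (Rmax_l (-a) b) (Rmax_r (-a) b); intros.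
  assert (HnN : (n >= N)%nat) by (apply INR_le; lra).
  specialize (HN n HnN). unfold Rdist, S in HN.
  generalize (key a b (- INR n) (INR n) ltac:(lra) ltac:(lra) ltac:(lra)); intro K.
  generalize (HM (- INR n) (INR n) ltac:(lra) ltac:(lra)) (HM a b ltac:(lra) ltac:(lra)); intros A B.
  apply Rabs_def2 in A; apply Rabs_def2 in B; apply Rabs_def2 in HN.
  apply Rabs_le_between in K. apply Rabs_def1; lra.
Qed.

Lemma ex_RInt_comp_oppR (f : R -> R) a b : ex_RInt f (-a) (-b) -> ex_RInt (fun y => f (- y)) a b.
Proof.
  intros H. apply ex_RInt_comp_opp in H.
  apply ex_RInt_extR with (fun y => -1 * opp (f (- y))).
  intros; unfold opp; simpl; ring.
  apply ex_RInt_scalR. exact H.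
Qed.

Lemma RInt_comp_oppR (f : R -> R) a b : ex_RInt f (-a) (-b) ->
  RInt (fun y => f (- y)) a b = - RInt f (-a) (-b).
Proof.
  intros H. generalize (RInt_correct _ _ _ H); intro H'.
  apply is_RInt_comp_opp in H'.
  apply is_RInt_unique in H'.
  rewrite <- H'.
  rewrite (RInt_ext (fun y => opp (f (- y))) (fun y => -1 * f (-y))) by (intros; unfold opp; simpl; ring).
  rewrite RInt_scalR. generalize (RInt (fun x : R => f (- x)) a b). intros X. simpl in X. change (@eq R X (- (-1 * X))). ring.
  apply ex_RInt_comp_oppR; auto.
Qed.

Lemma RInt_comp_linR (f : R -> R) (u v a b : R) : u <> 0 -> (forall a b, ex_RInt f a b) ->
  RInt (fun y => f (u * y + v)) a b = / u * RInt f (u * a + v) (u * b + v).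
Proof.
  intros Hu Hf.
  assert (E := RInt_comp_lin f u v a b (Hf _ _)).
  rewrite <- E.
  assert (Ex : ex_RInt (fun y : R => f (u * y + v)) a b).
  { apply ex_RInt_extR with (fun y => / u * (u * (f (u * y + v)))).
    intros. field; auto.
    apply ex_RInt_scalR. apply (ex_RInt_comp_lin (V:=R_NormedModule) f u v a b); auto. }
  rewrite (RInt_ext (fun y : R => scal u (f (u * y + v))) (fun y => u * f (u * y + v))) by reflexivity.
  rewrite RInt_scalR by exact Ex.
  generalize (RInt (fun y : R => f (u * y + v)) a b); intros X; simpl in X.
  change (@eq R X (/ u * (u * X))). field; auto.
Qed.

Lemma ex_RInt_comp_linR (f : R -> R) (u v a b : R) : u <> 0 -> (forall a b, ex_RInt f a b) ->
  ex_RInt (fun y => f (u * y + v)) a b.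
Proof.
  intros Hu Hf.
  apply ex_RInt_extR with (fun y => / u * (u * (f (u * y + v)))).
  intros. field; auto.
  apply ex_RInt_scalR. apply (ex_RInt_comp_lin (V:=R_NormedModule) f u v a b); auto.
Qed.

Lemma IR_comp_lin f L al be : 0 < al -> IR f L -> IR (fun x => f (al * x + be)) (L / al).
Proof.
  intros Hal [H1 H2]; split.
  - intros; apply ex_RInt_comp_linR; auto; lra.
  - intros eps Heps.
    destruct (H2 (eps * al)) as [M HM]. nra.
    exists ((Rabs M + Rabs be) / al). intros a b Ha Hb.
    rewrite RInt_comp_linR by (auto; lra).
    generalize (Rle_abs M) (Rle_abs be) (Rabs_pos M) (Rabs_pos be) (Rle_abs (-be)); rewrite Rabs_Ropp; intros.
    assert (E1 : al * a + be <= - M).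
    { apply Rmult_le_compat_l with (r := al) in Ha; [|lra].
      replace (al * - ((Rabs M + Rabs be) / al)) with (- (Rabs M + Rabs be)) in Ha by (field; lra). lra. }
    assert (E2 : M <= al * b + be).
    { apply Rmult_le_compat_l with (r := al) in Hb; [|lra].
      replace (al * ((Rabs M + Rabs be) / al)) with ((Rabs M + Rabs be)) in Hb by (field; lra). lra. }
    specialize (HM _ _ E1 E2).
    replace (/ al * RInt f (al * a + be) (al * b + be) - L / al) with (/ al * (RInt f (al * a + be) (al * b + be) - L)) by (field; lra).
    rewrite Rabs_mult, Rabs_inv, (Rabs_right al) by lra.
    apply Rmult_lt_reg_l with al; auto. rewrite <- Rmult_assoc, Rinv_r by lra. lra.
Qed.

Lemma RInt_even (f : R -> R) b : (forall a b, ex_RInt f a b) -> (forall x, f (- x) = f x) ->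
  @eq R (RInt f (- b) b) (2 * RInt f 0 b).
Proof.
  intros Hf He.
  rewrite <- (RInt_ChaslesR f (-b) 0 b) by auto.
  assert (@eq R (RInt f (-b) 0) (RInt f 0 b)).
  { rewrite (RInt_extR f (fun y => f (- y))) by (intros; rewrite He; reflexivity).
    rewrite RInt_comp_oppR by auto. rewrite Ropp_involutive, Ropp_0.
    rewrite RInt_swapR by auto. ring. }
  lra.
Qed.

Lemma RInt_odd (f : R -> R) b : (forall a b, ex_RInt f a b) -> (forall x, f (- x) = - f x) ->
  @eq R (RInt f (- b) b) 0.
Proof.
  intros Hf He.
  rewrite <- (RInt_ChaslesR f (-b) 0 b) by auto.
  assert (@eq R (RInt f (-b) 0) (- RInt f 0 b)).
  { rewrite (RInt_extR f (fun y => -1 * f (- y))) by (intros; rewrite <- (Ropp_involutive x) at 1; rewrite He; ring).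
    rewrite RInt_scalR by (apply ex_RInt_comp_oppR; auto).
    rewrite RInt_comp_oppR by auto. rewrite Ropp_involutive, Ropp_0.
    rewrite RInt_swapR by auto. ring. }
  lra.
Qed.

Lemma IR_odd f L : (forall x, f (- x) = - f x) -> IR f L -> L = 0.
Proof.
  intros He [H1 H2].
  apply Rnot_lt_le in H1 || idtac.
  destruct (Req_dec L 0) as [|Hn]; auto.
  destruct (H2 (Rabs L)) as [M HM]. apply Rabs_pos_lt; auto.
  specialize (HM (- Rabs M) (Rabs M) ltac:(generalize (Rle_abs M); lra) ltac:(generalize (Rle_abs M); lra)).
  rewrite RInt_odd in HM; auto. rewrite Rminus_0_l, Rabs_Ropp in HM. lra.
Qed.

Lemma ex_RInt_contR (f : R -> R) a b : (forall z, continuous f z) -> ex_RInt f a b.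
Proof. intros H. apply (ex_RInt_continuous (V:=R_CompleteNormedModule)). intros; apply H. Qed.

Lemma contD (f : R -> R) x : ex_derive f x -> continuous f x.
Proof. intros H. exact (ex_derive_continuous (K:=R_AbsRing) (V:=R_NormedModule) f x H). Qed.

Lemma cont2_fst f x y : continuity_2d_pt f x y -> continuous (fun x => f x y) x.
Proof.
  intros H. apply continuity_pt_filterlim.
  intros eps Heps. destruct (H (mkposreal eps Heps)) as [d Hd].
  exists d; split. apply cond_pos. intros z [_ Hz]. simpl in *. unfold Rdist in *.
  apply Hd; auto. rewrite Rminus_diag, Rabs_R0; apply cond_pos.
Qed.

Lemma cont2_snd f x y : continuity_2d_pt f x y -> continuous (fun y => f x y) y.
Proof.
  intros H. apply continuity_pt_filterlim.
  intros eps Heps. destruct (H (mkposreal eps Heps)) as [d Hd].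
  exists d; split. apply cond_pos. intros z [_ Hz]. simpl in *. unfold Rdist in *.
  apply Hd; auto. rewrite Rminus_diag, Rabs_R0; apply cond_pos.
Qed.

Lemma cont2_swap f x y : continuity_2d_pt f x y -> continuity_2d_pt (fun u v => f v u) y x.
Proof.
  intros H eps. destruct (H eps) as [d Hd]. exists d. intros u v Hu Hv. apply Hd; auto.
Qed.

Lemma cont2_exp f x y : continuity_2d_pt f x y -> continuity_2d_pt (fun u v => exp (f u v)) x y.
Proof.
  intros H. apply continuity_1d_2d_pt_comp; auto.
  apply derivable_continuous_pt, derivable_pt_exp.
Qed.
Lemma cont2_cos f x y : continuity_2d_pt f x y -> continuity_2d_pt (fun u v => cos (f u v)) x y.
Proof.
  intros H. apply continuity_1d_2d_pt_comp; auto.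
  apply derivable_continuous_pt, derivable_pt_cos.
Qed.
Lemma cont2_sin f x y : continuity_2d_pt f x y -> continuity_2d_pt (fun u v => sin (f u v)) x y.
Proof.
  intros H. apply continuity_1d_2d_pt_comp; auto.
  apply derivable_continuous_pt, derivable_pt_sin.
Qed.

Lemma cont2_pow f n x y : continuity_2d_pt f x y -> continuity_2d_pt (fun u v => f u v ^ n) x y.
Proof.
  intros H. induction n.
  - apply continuity_2d_pt_ext with (fun _ _ => 1). intros; simpl; auto. apply continuity_2d_pt_const.
  - apply continuity_2d_pt_ext with (fun u v => f u v * f u v ^ n). intros; simpl; auto.
    apply continuity_2d_pt_mult; auto.
Qed.

Lemma cont2_div f g x y : continuity_2d_pt f x y -> continuity_2d_pt g x y -> g x y <> 0 ->
  continuity_2d_pt (fun u v => f u v / g u v) x y.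
Proof.
  intros Hf Hg Hn. unfold Rdiv. apply continuity_2d_pt_mult; auto. apply continuity_2d_pt_inv; auto.
Qed.

Ltac c2 := repeat first [ apply cont2_exp | apply cont2_cos | apply cont2_sin
  | apply continuity_2d_pt_plus | apply continuity_2d_pt_minus | apply continuity_2d_pt_mult
  | apply continuity_2d_pt_opp | apply continuity_2d_pt_const | apply cont2_pow | apply cont2_div | apply continuity_2d_pt_id1 | apply continuity_2d_pt_id2
  | apply continuity_2d_pt_const ].

Section Contour.
Variables P Q Ps Qs : R -> R -> R.
Hypothesis HPs : forall k t, is_derive (fun t => P k t) t (Ps k t).
Hypothesis HQs : forall k t, is_derive (fun t => Q k t) t (Qs k t).
Hypothesis HPk : forall k t, is_derive (fun k => P k t) k (Qs k t).
Hypothesis HQk : forall k t, is_derive (fun k => Q k t) k (- Ps k t).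
Hypothesis CP : forall k t, continuity_2d_pt P k t.
Hypothesis CQ : forall k t, continuity_2d_pt Q k t.
Hypothesis CPs : forall k t, continuity_2d_pt Ps k t.
Hypothesis CQs : forall k t, continuity_2d_pt Qs k t.

Let u k t := exp (P k t) * cos (Q k t).
Let v k t := exp (P k t) * sin (Q k t).
Let U k t := exp (P k t) * (Ps k t * cos (Q k t) - Qs k t * sin (Q k t)).

Let Cu : forall k t, continuity_2d_pt u k t.
Proof. intros; unfold u; c2; auto. Qed.
Let Cv : forall k t, continuity_2d_pt v k t.
Proof. intros; unfold v; c2; auto. Qed.
Let CU : forall k t, continuity_2d_pt U k t.
Proof. intros; unfold U; c2; auto. Qed.

Let Du : forall k t, is_derive (fun t => u k t) t (U k t).
Proof.
  intros k t. unfold u, U.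
  evar (d : R). replace (exp (P k t) * (Ps k t * cos (Q k t) - Qs k t * sin (Q k t))) with d.
  apply (is_derive_mult (fun t => exp (P k t)) (fun t => cos (Q k t))).
  apply (is_derive_comp exp (fun t => P k t)). apply is_derive_exp. apply HPs.
  apply (is_derive_comp cos (fun t => Q k t)). apply is_derive_cos. apply HQs.
  intros; apply Rmult_comm.
  unfold d. simpl. unfold scal, mult, plus; simpl. unfold mult; simpl. ring.
Qed.

Let Dv : forall k t, is_derive (fun k => - v k t) k (U k t).
Proof.
  intros k t. unfold v, U.
  evar (d : R). replace (exp (P k t) * (Ps k t * cos (Q k t) - Qs k t * sin (Q k t))) with d.
  apply (is_derive_opp (fun k => exp (P k t) * sin (Q k t))).
  apply (is_derive_mult (fun k => exp (P k t)) (fun k => sin (Q k t))).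
  apply (is_derive_comp exp (fun k => P k t)). apply is_derive_exp. apply HPk.
  apply (is_derive_comp sin (fun k => Q k t)). apply is_derive_sin. apply HQk.
  intros; apply Rmult_comm.
  unfold d. simpl. unfold scal, mult, plus, opp; simpl. unfold mult; simpl. ring.
Qed.

Lemma contour a b s :
  RInt (fun k => exp (P k s) * cos (Q k s)) a b - RInt (fun k => exp (P k 0) * cos (Q k 0)) a b =
  - RInt (fun t => exp (P b t) * sin (Q b t) - exp (P a t) * sin (Q a t)) 0 s.
Proof.
  set (w t := v b t - v a t).
  assert (Cw : forall t, continuous w t).
  { intros t; unfold w. apply (continuous_minus (fun t => v b t) (fun t => v a t)); apply cont2_snd; auto. }
  assert (Exw : forall x y, ex_RInt w x y).
  { intros; apply ex_RInt_contR; intros; auto. }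
  assert (Exu : forall s x y, ex_RInt (fun k => u k s) x y).
  { intros; apply ex_RInt_contR; intros; apply cont2_fst; auto. }
  set (H s := RInt (fun k => u k s) a b + RInt w 0 s).
  assert (DH : forall s, is_derive H s 0).
  { intros s0. unfold H.
    assert (D1 : is_derive (fun s => RInt (fun k => u k s) a b) s0 (RInt (fun k => U k s0) a b)).
    { assert (E : RInt (fun k => U k s0) a b = RInt (fun t => Derive (fun z => u t z) s0) a b).
      { apply RInt_extR. intros; symmetry; apply is_derive_unique; auto. }
      rewrite E.
      apply (is_derive_RInt_param (fun s k => u k s)).
      + apply filter_forall. intros; eexists; apply Du.
      + intros t _. apply continuity_2d_pt_ext with (fun s t => U t s).
        intros; symmetry; apply is_derive_unique; auto.
        apply cont2_swap; auto.
      + apply filter_forall. intros; apply Exu. }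
    assert (D2 : is_derive (fun s => RInt w 0 s) s0 (w s0)).
    { apply (is_derive_RInt w (RInt w 0) 0).
      apply filter_forall. intros; apply (RInt_correct (V:=R_CompleteNormedModule)); auto.
      auto. }
    assert (E : RInt (fun k => U k s0) a b + w s0 = 0).
    { assert (I := is_RInt_derive (fun k => - v k s0) (fun k => U k s0) a b).
      apply is_RInt_unique in I.
      rewrite I. unfold w, minus, plus, opp; simpl. ring.
      intros; apply Dv. intros; apply cont2_fst; auto. }
    assert (D := is_derive_plus _ _ _ _ _ D1 D2). unfold plus in D; simpl in D. rewrite E in D. exact D. }
  assert (HH : H s = H 0).
  { destruct (Rtotal_order s 0) as [Hl|[He|Hg]].
    - apply eq_is_derive with (f := H); [intros t _; exact (DH t)|lra].
    - rewrite He; reflexivity.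
    - symmetry; apply eq_is_derive with (f := H); [intros t _; exact (DH t)|lra]. }
  unfold H in HH. rewrite RInt_point in HH.
  change (RInt (fun k => u k s) a b - RInt (fun k => u k 0) a b = - RInt w 0 s).
  unfold zero in HH; simpl in HH. lra.
Qed.

End Contour.

Definition gs (t : R) := exp (- (t * t)).
Definition J (x : R) := RInt gs 0 x.

Lemma gs_cont x : continuous gs x.
Proof. apply contD. unfold gs. auto_derive. auto. Qed.

Lemma gs_ex a b : ex_RInt gs a b.
Proof. apply ex_RInt_contR. apply gs_cont. Qed.

Lemma J_deriv x : is_derive J x (gs x).
Proof.
  apply (is_derive_RInt gs J 0). apply filter_forall. intros; apply (RInt_correct (V:=R_CompleteNormedModule)); apply gs_ex.
  apply gs_cont.
Qed.

Definition gg (x : R) := RInt (fun t => exp (- (x * x) * (1 + t * t)) / (1 + t * t)) 0 1.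

Lemma one_plus_sq t : 0 < 1 + t * t.
Proof. nra. Qed.

Lemma gg_deriv x : is_derive gg x (- 2 * gs x * J x).
Proof.
  unfold gg.
  set (f := fun x t => exp (- (x * x) * (1 + t * t)) / (1 + t * t)).
  set (df := fun x t => - 2 * x * exp (- (x * x) * (1 + t * t))).
  assert (Df : forall x t, is_derive (fun x => f x t) x (df x t)).
  { intros y t. unfold f, df. auto_derive. generalize (one_plus_sq t); lra.
    field. generalize (one_plus_sq t); lra. }
  assert (E : - 2 * gs x * J x = RInt (fun t => Derive (fun u => f u t) x) 0 1).
  { rewrite (RInt_extR _ (fun t => df x t)) by (intros; apply is_derive_unique; auto).
    unfold df. 
    rewrite (RInt_extR _ (fun t => (-2 * gs x) * (x * gs (x * t + 0)))).
    rewrite RInt_scalR. f_equal. unfold J. symmetry.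
    transitivity (RInt gs (x*0+0) (x*1+0)).
    rewrite <- (RInt_comp_lin gs x 0 0 1) by apply gs_ex. apply RInt_extR; intros; reflexivity.
    f_equal; ring.
    apply ex_RInt_contR. intros; apply contD. unfold gs; auto_derive; auto.
    intros t. unfold gs. replace (- (x * x) * (1 + t * t)) with (- (x * x) + - ((x * t + 0) * (x * t + 0))) by ring.
    rewrite exp_plus; ring. }
  rewrite E.
  apply (is_derive_RInt_param f 0 1 x).
  - apply filter_forall. intros; eexists; apply Df.
  - intros t _. apply continuity_2d_pt_ext with df.
    intros; symmetry; apply is_derive_unique; auto.
    unfold df. c2.
  - apply filter_forall. intros y. apply ex_RInt_contR. intros z.
    apply contD. unfold f. auto_derive. generalize (one_plus_sq z); lra.
Qed.

Lemma gs_J_const x : J x * J x + gg x = PI / 4.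
Proof.
  assert (D : forall y, is_derive (fun y => J y * J y + gg y) y 0).
  { intros y.
    assert (D1 := is_derive_mult J J y _ _ (J_deriv y) (J_deriv y) ltac:(intros; apply Rmult_comm)).
    assert (D2 := gg_deriv y).
    assert (D3 := is_derive_plus _ _ _ _ _ D1 D2).
    unfold plus, mult in D3; simpl in D3. unfold plus, mult in D3; simpl in D3.
    replace 0 with (gs y * J y + J y * gs y + -2 * gs y * J y) by ring. exact D3. }
  assert (H0 : J 0 * J 0 + gg 0 = PI / 4).
  { unfold J. rewrite RInt_point. unfold zero; simpl.
    unfold gg. rewrite (RInt_extR _ (fun t => / (1 + t * t))).
    assert (I := is_RInt_derive atan (fun t => / (1 + t * t)) 0 1).
    apply is_RInt_unique in I. rewrite I. unfold minus, plus, opp; simpl. rewrite atan_1, atan_0. ring.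
    intros t _. generalize (is_derive_atan t). unfold Rsqr. auto.
    intros t _. apply contD. auto_derive. generalize (one_plus_sq t); lra.
    intros t. replace (- (0 * 0) * (1 + t * t)) with 0 by ring. rewrite exp_0. field. generalize (one_plus_sq t); lra. }
  destruct (Rtotal_order x 0) as [Hl|[He|Hg]].
  - rewrite <- H0. apply (eq_is_derive (fun y => J y * J y + gg y)); [intros t _; exact (D t)|lra].
  - subst; auto.
  - rewrite <- H0. symmetry. apply (eq_is_derive (fun y => J y * J y + gg y)); [intros t _; exact (D t)|lra].
Qed.

Lemma exp_le_mono x y : x <= y -> exp x <= exp y.
Proof. intros [H|H]. apply Rlt_le, exp_increasing; auto. subst; lra. Qed.

Lemma RInt_constR (c a b : R) : RInt (fun _ => c) a b = (b - a) * c.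
Proof. exact (RInt_const (V:=R_CompleteNormedModule) a b c). Qed.

Lemma gg_bound x : 0 <= gg x <= exp (- (x * x)).
Proof.
  unfold gg. split.
  - apply RInt_ge0. lra. apply ex_RInt_contR; intros z; apply contD; auto_derive; generalize (one_plus_sq z); lra.
    intros t _. apply Rlt_le, Rdiv_lt_0_compat. apply exp_pos. apply one_plus_sq.
  - apply Rle_trans with (RInt (fun _ => exp (- (x * x))) 0 1).
    apply RInt_le. lra. apply ex_RInt_contR; intros z; apply contD; auto_derive; generalize (one_plus_sq z); lra.
    apply ex_RInt_contR; intros z; apply contD; auto_derive; auto.
    intros t Ht. assert (0 <= t * t) by nra.
    apply Rle_trans with (exp (- (x * x) * (1 + t * t))).
    unfold Rdiv. rewrite <- (Rmult_1_r (exp _)) at 2. apply Rmult_le_compat_l. apply Rlt_le, exp_pos.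
    rewrite <- Rinv_1. apply Rinv_le_contravar; lra.
    apply exp_le_mono. assert (0 <= x * x) by nra. nra.
    rewrite RInt_constR. lra.
Qed.

Lemma J_odd x : J (- x) = - J x.
Proof.
  unfold J. rewrite (RInt_extR gs (fun y => gs (- y))) by (intros; unfold gs; f_equal; ring).
  rewrite RInt_comp_oppR by apply gs_ex. rewrite Ropp_0, Ropp_involutive.
  rewrite RInt_swapR by apply gs_ex. rfix. ring.
Qed.

Lemma J_pos x : 0 <= x -> 0 <= J x.
Proof. intros; unfold J; apply RInt_ge0; auto. apply gs_ex. intros; unfold gs; apply Rlt_le, exp_pos. Qed.

Lemma J_lim x : 0 <= x -> Rabs (J x - sqrt PI / 2) <= 2 / sqrt PI * exp (- (x * x)).
Proof.
  intros Hx.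
  assert (HP : 0 < sqrt PI) by (apply sqrt_lt_R0, PI_RGT_0).
  assert (Hs : sqrt PI * sqrt PI = PI) by (apply sqrt_sqrt; generalize PI_RGT_0; lra).
  generalize (gs_J_const x) (gg_bound x) (J_pos x Hx); intros E B P.
  assert (F : (J x - sqrt PI / 2) * (J x + sqrt PI / 2) = - gg x) by nra.
  assert (0 < J x + sqrt PI / 2) by lra.
  assert (E2 : J x - sqrt PI / 2 = - gg x / (J x + sqrt PI / 2)).
  { unfold Rdiv. apply Rmult_eq_reg_r with (J x + sqrt PI / 2); [|lra].
    rewrite Rmult_assoc, Rinv_l by lra. rewrite Rmult_1_r. exact F. }
  rewrite E2.
  unfold Rdiv. rewrite Rabs_mult, Rabs_Ropp, Rabs_inv, (Rabs_right (gg x)), (Rabs_right (J x + _)) by lra.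
  apply Rle_trans with (exp (- (x * x)) * / (sqrt PI / 2)).
  apply Rmult_le_compat; try lra. apply Rlt_le, Rinv_0_lt_compat; lra.
  apply Rinv_le_contravar; lra.
  right; field; lra.
Qed.

Lemma exp_neg_le x : 0 < x -> exp (- x) <= / x.
Proof.
  intros Hx. generalize (exp_ineq1_le x) (exp_pos x); intros A B.
  rewrite exp_Ropp. apply Rinv_le_contravar; lra.
Qed.

Lemma J_close x eps : 0 < eps -> 1 + 4 / (sqrt PI * eps) <= x -> Rabs (J x - sqrt PI / 2) < eps / 2.
Proof.
  intros He Hx.
  assert (HP : 0 < sqrt PI) by (apply sqrt_lt_R0, PI_RGT_0).
  assert (H4 : 0 < 4 / (sqrt PI * eps)) by (apply Rdiv_lt_0_compat; nra).
  assert (Hx1 : 1 <= x) by lra.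
  eapply Rle_lt_trans. apply J_lim; lra.
  assert (Hxx : x <= x * x) by nra.
  eapply Rle_lt_trans. apply Rmult_le_compat_l. apply Rlt_le, Rdiv_lt_0_compat; lra.
  apply exp_neg_le. nra.
  apply Rmult_lt_reg_l with (sqrt PI * (x * x)). nra.
  replace (sqrt PI * (x * x) * (2 / sqrt PI * / (x * x))) with 2 by (field; split; nra).
  assert (4 / (sqrt PI * eps) < x * x) by lra.
  apply Rmult_lt_compat_l with (r := sqrt PI * eps) in H. 2: nra.
  replace (sqrt PI * eps * (4 / (sqrt PI * eps))) with 4 in H by (field; nra). nra.
Qed.

Lemma IR_gs : IR gs (sqrt PI).
Proof.
  split. apply gs_ex.
  intros eps He. exists (1 + 4 / (sqrt PI * eps)). intros a b Ha Hb.
  assert (HP : 0 < sqrt PI) by (apply sqrt_lt_R0, PI_RGT_0).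
  rewrite <- (RInt_ChaslesR gs a 0 b) by apply gs_ex.
  rewrite RInt_swapR by apply gs_ex.
  change (Rabs (- J a + J b - sqrt PI) < eps).
  rewrite <- (Ropp_involutive a), J_odd, Ropp_involutive.
  generalize (J_close (- a) eps He ltac:(lra)) (J_close b eps He Hb); intros A B.
  apply Rabs_def2 in A; apply Rabs_def2 in B. apply Rabs_def1; lra.
Qed.

Lemma RInt_bound_const (f : R -> R) a b M : ex_RInt f a b ->
  (forall t, Rmin a b <= t <= Rmax a b -> Rabs (f t) <= M) -> Rabs (RInt f a b) <= Rabs (b - a) * M.
Proof.
  intros Hf HM. destruct (Rle_dec a b) as [Hab|Hab].
  - rewrite (Rabs_right (b - a)) by lra. apply abs_RInt_le_const; auto.
    intros; apply HM. rewrite Rmin_left, Rmax_right; lra.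
  - rewrite RInt_swapR by (apply ex_RInt_swap; auto). rewrite Rabs_Ropp, (Rabs_left (b - a)) by lra.
    replace (- (b - a)) with (a - b) by ring.
    apply abs_RInt_le_const. lra. apply ex_RInt_swap; auto.
    intros; apply HM. rewrite Rmin_right, Rmax_left; lra.
Qed.

Lemma small_exp C eps : 0 < eps -> exists M, forall b, M <= b -> Rabs C * exp (- (b * b)) < eps.
Proof.
  intros He. exists (1 + Rabs C / eps). intros b Hb.
  assert (0 <= Rabs C / eps) by (apply Rdiv_le_0_compat; [apply Rabs_pos|lra]).
  assert (Hb1 : 1 <= b) by lra.
  eapply Rle_lt_trans. apply Rmult_le_compat_l. apply Rabs_pos. apply exp_neg_le. nra.
  destruct (Req_dec (Rabs C) 0) as [E|E].
  - rewrite E; lra.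
  - assert (0 < Rabs C) by (generalize (Rabs_pos C); lra).
    apply Rmult_lt_reg_l with (b * b). nra.
    replace (b * b * (Rabs C * / (b * b))) with (Rabs C) by (field; nra).
    assert (Rabs C / eps < b) by lra.
    apply Rmult_lt_compat_l with (r := eps) in H1; [|lra].
    replace (eps * (Rabs C / eps)) with (Rabs C) in H1 by (field; lra). nra.
Qed.

Lemma Rabs_cos x : Rabs (cos x) <= 1.
Proof. destruct (COS_bound x). apply Rabs_le; lra. Qed.
Lemma Rabs_sin x : Rabs (sin x) <= 1.
Proof. destruct (SIN_bound x). apply Rabs_le; lra. Qed.

Lemma IR_sym_eq f L L' : IR f L ->
  (forall eps, 0 < eps -> exists M, forall b, M <= b -> Rabs (RInt f (- b) b - L') < eps) -> L = L'.
Proof.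
  intros [H1 H2] H3.
  destruct (Req_dec L L') as [|Hn]; auto. exfalso.
  assert (Hd : 0 < Rabs (L - L') / 2) by (apply Rdiv_lt_0_compat; [apply Rabs_pos_lt; lra|lra]).
  destruct (H2 _ Hd) as [M1 HM1]. destruct (H3 _ Hd) as [M2 HM2].
  set (b := Rabs M1 + Rabs M2).
  generalize (Rle_abs M1) (Rle_abs M2) (Rabs_pos M1) (Rabs_pos M2); intros.
  specialize (HM1 (- b) b ltac:(unfold b; lra) ltac:(unfold b; lra)).
  specialize (HM2 b ltac:(unfold b; lra)).
  assert (T : Rabs (L - L') <= Rabs (RInt f (- b) b - L') + Rabs (RInt f (- b) b - L)).
  { replace (L - L') with ((RInt f (- b) b - L') - (RInt f (- b) b - L)) by ring.
    unfold Rminus at 1. eapply Rle_trans. apply Rabs_triang. rewrite Rabs_Ropp; lra. }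
  lra.
Qed.

Definition Pg (k t : R) := t * t - k * k.
Definition Qg (k t : R) := - (2 * k * t).

Lemma gauss_cos2 s : IR (fun k => gs k * cos (2 * s * k)) (sqrt PI * exp (- (s * s))).
Proof.
  set (u k := exp (Pg k s) * cos (Qg k s)).
  assert (Eu : forall k, u k = exp (s * s) * (gs k * cos (2 * s * k))).
  { intros k; unfold u, Pg, Qg, gs. replace (s * s - k * k) with (s * s + - (k * k)) by ring.
    rewrite exp_plus. replace (- (2 * k * s)) with (- (2 * s * k)) by ring. rewrite cos_neg. ring. }
  assert (Cu : forall k, continuous u k).
  { intros k. apply contD. unfold u, Pg, Qg. auto_derive. auto. }
  destruct (IR_dom u (fun k => exp (s * s) * gs k) (exp (s * s) * sqrt PI)) as [L HL].
  - intros; apply ex_RInt_contR; auto.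
  - intros k. rewrite Eu. rewrite Rabs_mult, Rabs_mult, (Rabs_right (exp _)) by (apply Rle_ge, Rlt_le, exp_pos).
    rewrite (Rabs_right (gs k)) by (unfold gs; apply Rle_ge, Rlt_le, exp_pos).
    rewrite <- (Rmult_1_r (gs k)) at 2. apply Rmult_le_compat_l. apply Rlt_le, exp_pos.
    apply Rmult_le_compat_l. unfold gs; apply Rlt_le, exp_pos. apply Rabs_cos.
  - apply IR_scal, IR_gs.
  - assert (HLv : L = sqrt PI).
    { apply (IR_sym_eq u L (sqrt PI) HL).
      intros eps He.
      destruct IR_gs as [_ G]. destruct (G (eps / 2)) as [M1 HM1]; [lra|].
      destruct (small_exp (2 * s * exp (s * s)) (eps / 2)) as [M2 HM2]; [lra|].
      exists (Rmax (Rabs M1) (Rmax M2 0)). intros b Hb.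
      generalize (Rmax_l (Rabs M1) (Rmax M2 0)) (Rmax_r (Rabs M1) (Rmax M2 0)) (Rmax_l M2 0) (Rmax_r M2 0) (Rle_abs M1); intros.
      assert (Hc := contour Pg Qg (fun k t => 2 * t) (fun k t => - (2 * k))).
      assert (E := Hc ltac:(intros; unfold Pg; auto_derive; auto; ring)
                           ltac:(intros; unfold Qg; auto_derive; auto; ring)
                           ltac:(intros; unfold Pg; auto_derive; auto; ring)
                           ltac:(intros; unfold Qg; auto_derive; auto; ring)
                           ltac:(intros; unfold Pg; c2) ltac:(intros; unfold Qg; c2)
                           ltac:(intros; c2) ltac:(intros; c2) (- b) b s).
      rewrite (RInt_extR (fun k => exp (Pg k 0) * cos (Qg k 0)) gs) in E.
      2: { intros k; unfold Pg, Qg, gs. replace (0 * 0 - k * k) with (- (k * k)) by ring.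
           replace (- (2 * k * 0)) with 0 by ring. rewrite cos_0; ring. }
      set (w := fun t => exp (Pg b t) * sin (Qg b t) - exp (Pg (- b) t) * sin (Qg (- b) t)) in E.
      assert (Bw : Rabs (RInt w 0 s) <= Rabs (2 * s * exp (s * s)) * exp (- (b * b))).
      { eapply Rle_trans. apply RInt_bound_const with (M := 2 * exp (s * s) * exp (- (b * b))).
        apply ex_RInt_contR. intros; apply contD; unfold w, Pg, Qg; auto_derive; auto.
        intros t Ht.
        assert (Htt : t * t <= s * s).
        { destruct (Rle_dec 0 s). rewrite Rmin_left, Rmax_right in Ht by lra. nra.
          rewrite Rmin_right, Rmax_left in Ht by lra. nra. }
        unfold w. unfold Rminus at 1. eapply Rle_trans. apply Rabs_triang. rewrite Rabs_Ropp.
        assert (K : forall c, Rabs (exp (t * t - c * c) * sin (Qg c t)) <= exp (s * s) * exp (- (c * c))).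
        { intros c. rewrite Rabs_mult, Rabs_right by (apply Rle_ge, Rlt_le, exp_pos).
          rewrite <- exp_plus. rewrite <- (Rmult_1_r (exp (s * s + - (c * c)))).
          apply Rmult_le_compat. apply Rlt_le, exp_pos. apply Rabs_pos.
          apply exp_le_mono; lra. apply Rabs_sin. }
        unfold Pg. generalize (K b) (K (- b)). replace (- b * - b) with (b * b) by ring. lra.
        rewrite Rminus_0_r. rewrite !Rabs_mult. rewrite (Rabs_right 2) by lra.
        rewrite (Rabs_right (exp (s * s))) by (apply Rle_ge, Rlt_le, exp_pos). lra. }
      specialize (HM2 b ltac:(lra)).
      specialize (HM1 (- b) b ltac:(lra) ltac:(lra)).
      unfold u.
      replace (RInt (fun k => exp (Pg k s) * cos (Qg k s)) (- b) b - sqrt PI) with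
        ((RInt gs (- b) b - sqrt PI) - RInt w 0 s) by lra.
      unfold Rminus at 1. eapply Rle_lt_trans. apply Rabs_triang. rewrite Rabs_Ropp. lra. }
    rewrite HLv in HL.
    apply IR_ext with (fun k => exp (- (s * s)) * u k).
    intros k. rewrite Eu, <- Rmult_assoc, <- exp_plus. replace (- (s * s) + s * s) with 0 by ring. rewrite exp_0; ring.
    replace (sqrt PI * exp (- (s*s))) with (exp (- (s*s)) * sqrt PI) by ring. apply IR_scal. exact HL.
Qed.

Lemma gauss_shift lam th : IR (fun z => gs z * cos (lam * z + th)) (sqrt PI * exp (- (lam * lam) / 4) * cos th).
Proof.
  destruct (IR_dom (fun z => gs z * sin (lam * z)) gs (sqrt PI)) as [Ls HLs].
  - intros; apply ex_RInt_contR; intros; apply contD; unfold gs; auto_derive; auto.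
  - intros z. rewrite Rabs_mult, (Rabs_right (gs z)) by (unfold gs; apply Rle_ge, Rlt_le, exp_pos).
    rewrite <- (Rmult_1_r (gs z)) at 2. apply Rmult_le_compat_l. unfold gs; apply Rlt_le, exp_pos. apply Rabs_sin.
  - apply IR_gs.
  - assert (Ls = 0).
    { apply (IR_odd (fun z => gs z * sin (lam * z)) Ls); auto. intros x. unfold gs. replace (- x * - x) with (x * x) by ring.
      replace (lam * - x) with (- (lam * x)) by ring. rewrite sin_neg; ring. }
    subst Ls.
    assert (Hc := gauss_cos2 (lam / 2)).
    apply IR_ext with (fun z => cos th * (gs z * cos (2 * (lam / 2) * z)) - sin th * (gs z * sin (lam * z))).
    intros z. rewrite cos_plus. replace (2 * (lam / 2) * z) with (lam * z) by field. ring.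
    replace (sqrt PI * exp (- (lam * lam) / 4) * cos th) with
      (cos th * (sqrt PI * exp (- (lam / 2 * (lam / 2)))) - sin th * 0).
    apply IR_minus; apply IR_scal; auto.
    replace (- (lam / 2 * (lam / 2))) with (- (lam * lam) / 4) by field. ring.
Qed.

Lemma sqrt_4PIs s : 0 < s -> sqrt (4 * PI * s) = 2 * sqrt PI * sqrt s.
Proof.
  intros Hs.
  assert (HP : 0 < sqrt PI) by (apply sqrt_lt_R0, PI_RGT_0).
  assert (Hr : 0 < sqrt s) by (apply sqrt_lt_R0; auto).
  assert (E1 : sqrt PI * sqrt PI = PI) by (apply sqrt_sqrt; generalize PI_RGT_0; lra).
  assert (E2 : sqrt s * sqrt s = s) by (apply sqrt_sqrt; lra).
  replace (4 * PI * s) with ((2 * sqrt PI * sqrt s) * (2 * sqrt PI * sqrt s)).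
  apply sqrt_square. nra.
  transitivity (4 * (sqrt PI * sqrt PI) * (sqrt s * sqrt s)). ring. rewrite E1, E2; ring.
Qed.

Lemma heat_gauss c kap be y s : 0 < s ->
  IR (fun x => exp (c * x) * cos (kap * x + be) * phi_heat s x y)
     (exp (c * y + s * (c * c - kap * kap)) * cos (kap * y + be + 2 * s * c * kap)).
Proof.
  intros Hs.
  set (r := sqrt s).
  assert (Hr : 0 < r) by (apply sqrt_lt_R0; auto).
  assert (Er : r * r = s) by (apply sqrt_sqrt; lra).
  assert (Sq : sqrt (4 * PI * s) = 2 * sqrt PI * r) by (apply sqrt_4PIs; auto).
  clearbody r.
  assert (HP : 0 < sqrt PI) by (apply sqrt_lt_R0, PI_RGT_0).
  set (lam := 2 * kap * r). set (th := kap * y + 2 * s * c * kap + be).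
  set (K := exp (c * y + s * c * c) / (2 * sqrt PI * r)).
  assert (H1 := IR_comp_lin _ _ (/ (2 * r)) (- (y + 2 * s * c) / (2 * r)) ltac:(apply Rinv_0_lt_compat; lra) (gauss_shift lam th)).
  assert (H2 := IR_scal _ K _ H1).
  apply IR_ext with (1 := fun x => eq_refl _) in H2.
  eapply IR_ext in H2.
  - replace (exp (c * y + s * (c * c - kap * kap)) * cos (kap * y + be + 2 * s * c * kap)) with
      (K * (sqrt PI * exp (- (lam * lam) / 4) * cos th / / (2 * r))). exact H2.
    unfold K, lam, th. replace (kap * y + be + 2 * s * c * kap) with (kap * y + 2 * s * c * kap + be) by ring.
    assert (Ee : c * y + s * (c * c - kap * kap) = (c * y + s * c * c) + - (2 * kap * r * (2 * kap * r)) / 4).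
    { rewrite <- Er. field. }
    rewrite Ee, (exp_plus (c * y + s * c * c)). field. lra.
  - intros x. simpl. unfold phi_heat. rewrite Sq.
    unfold K, gs, lam, th.
    replace (2 * kap * r * (/ (2 * r) * x + - (y + 2 * s * c) / (2 * r)) + (kap * y + 2 * s * c * kap + be))
      with (kap * x + be) by (field; lra).
    replace (exp (c * x)) with (exp (c * y + s * c * c) * exp (- ((/ (2 * r) * x + - (y + 2 * s * c) / (2 * r)) *
       (/ (2 * r) * x + - (y + 2 * s * c) / (2 * r)))) * / exp (- (x - y) ^ 2 / (4 * s))).
    field; repeat split; try lra; try (apply Rgt_not_eq, exp_pos).
    rewrite <- exp_plus, <- exp_Ropp, <- exp_plus. f_equal.
    rewrite <- Er. field. lra.
Qed.

Definition Pa (A k t : R) := - (t * (k * k)) + t * t * t * (/ 3) - A * t.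
Definition Qa (A k t : R) := k * k * k * (/ 3) - k * (t * t) + A * k.
Definition ua (A s k : R) := exp (Pa A k s) * cos (Qa A k s).

Lemma IR_gauss_scaled s : 0 < s -> IR (fun k => exp (- (s * (k * k)))) (sqrt PI / sqrt s).
Proof.
  intros Hs. assert (Hr : 0 < sqrt s) by (apply sqrt_lt_R0; auto).
  apply IR_ext with (fun k => gs (sqrt s * k + 0)).
  intros k. unfold gs. f_equal. f_equal.
  replace ((sqrt s * k + 0) * (sqrt s * k + 0)) with ((sqrt s * sqrt s) * (k * k)) by ring.
  rewrite sqrt_sqrt; lra.
  apply IR_comp_lin; auto. apply IR_gs.
Qed.

Lemma contour_airy A b s :
  RInt (ua A s) (- b) b - RInt (ua A 0) (- b) b =
  - RInt (fun t => exp (Pa A b t) * sin (Qa A b t) - exp (Pa A (- b) t) * sin (Qa A (- b) t)) 0 s.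
Proof.
  apply (contour (Pa A) (Qa A) (fun k t => - (k * k) + t * t - A) (fun k t => - (2 * k * t))).
  - intros; unfold Pa; auto_derive; auto; field.
  - intros; unfold Qa; auto_derive; auto; field.
  - intros; unfold Pa; auto_derive; auto; field.
  - intros; unfold Qa; auto_derive; auto; field.
  - intros; unfold Pa; c2.
  - intros; unfold Qa; c2.
  - intros; c2.
  - intros; c2.
Qed.

Lemma ua0 A k : ua A 0 k = cos (k ^ 3 / 3 + A * k).
Proof.
  unfold ua, Pa, Qa. replace (- (0 * (k * k)) + 0 * 0 * 0 * / 3 - A * 0) with 0 by ring.
  rewrite exp_0, Rmult_1_l. f_equal. field.
Qed.

Lemma ua_cont A s k : continuous (ua A s) k.
Proof. apply contD. unfold ua, Pa, Qa. auto_derive. auto. Qed.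

Lemma RInt_exp_lin c s : 0 < c -> 0 <= s -> RInt (fun t => exp (- (t * c))) 0 s <= / c.
Proof.
  intros Hc Hs.
  assert (I := is_RInt_derive (fun t => - exp (- (t * c)) / c) (fun t => exp (- (t * c))) 0 s).
  apply is_RInt_unique in I. rewrite I. unfold minus, plus, opp; simpl.
  replace (- (0 * c)) with 0 by ring. rewrite exp_0.
  assert (0 < exp (- (s * c))) by apply exp_pos.
  apply Rmult_le_reg_r with c; auto. field_simplify; lra.
  intros; auto_derive; auto. field; lra.
  intros; apply contD; auto_derive; auto.
Qed.

Lemma Ai_IR A s : 0 < s -> IR (ua A s) (2 * PI * Ai A).
Proof.
  intros Hs.
  set (E := exp (s * s * s * / 3 + Rabs A * s)).
  destruct (IR_dom (ua A s) (fun k => E * exp (- (s * (k * k)))) (E * (sqrt PI / sqrt s))) as [L HL].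
  - intros; apply ex_RInt_contR; apply ua_cont.
  - intros k. unfold ua. rewrite Rabs_mult, (Rabs_right (exp _)) by (apply Rle_ge, Rlt_le, exp_pos).
    rewrite <- (Rmult_1_r (E * _)). apply Rmult_le_compat. apply Rlt_le, exp_pos. apply Rabs_pos.
    unfold E. rewrite <- exp_plus. apply exp_le_mono. unfold Pa.
    generalize (Rle_abs A) (Rle_abs (- A)); rewrite Rabs_Ropp; intros. nra.
    apply Rabs_cos.
  - apply IR_scal, IR_gauss_scaled; auto.
  - assert (Hlim : is_lim (fun b => RInt (fun t => cos (t ^ 3 / 3 + A * t)) 0 b) p_infty (L / 2)).
    { apply is_lim_spec. intros eps.
      destruct HL as [HL1 HL2].
      destruct (HL2 eps (cond_pos eps)) as [M HM].
      exists (Rmax (Rabs M) (1 + 2 * E / eps)). intros b Hb.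
      assert (HE : 0 < E) by apply exp_pos.
      generalize (Rmax_l (Rabs M) (1 + 2 * E / eps)) (Rmax_r (Rabs M) (1 + 2 * E / eps)) (Rle_abs M) (cond_pos eps); intros.
      assert (0 < 2 * E / eps) by (apply Rdiv_lt_0_compat; lra).
      specialize (HM (- b) b ltac:(lra) ltac:(lra)).
      assert (Ev : RInt (fun t => cos (t ^ 3 / 3 + A * t)) 0 b = RInt (ua A 0) (- b) b / 2).
      { rewrite RInt_even. rewrite (RInt_extR (ua A 0) (fun t => cos (t ^ 3 / 3 + A * t))) by apply ua0.
        generalize (RInt (fun t => cos (t ^ 3 / 3 + A * t)) 0 b); intros X; simpl in X. rfix. field.
        intros; apply ex_RInt_contR; apply ua_cont.
        intros x; rewrite !ua0. rewrite <- cos_neg. f_equal. field. }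
      rewrite Ev.
      assert (C := contour_airy A b s).
      set (w := fun t => exp (Pa A b t) * sin (Qa A b t) - exp (Pa A (- b) t) * sin (Qa A (- b) t)) in C.
      assert (Bw : Rabs (RInt w 0 s) <= 2 * E / (b * b)).
      { eapply Rle_trans. apply RInt_abs_le with (h := fun t => 2 * E * exp (- (t * (b * b)))). lra.
        apply ex_RInt_contR; intros; apply contD; unfold w, Pa, Qa; auto_derive; auto.
        apply ex_RInt_contR; intros; apply contD; auto_derive; auto.
        intros t Ht. unfold w. unfold Rminus at 1. eapply Rle_trans. apply Rabs_triang. rewrite Rabs_Ropp.
        assert (K : forall c, c * c = b * b -> Rabs (exp (Pa A c t) * sin (Qa A c t)) <= E * exp (- (t * (b * b)))).
        { intros c Hc. rewrite Rabs_mult, (Rabs_right (exp _)) by (apply Rle_ge, Rlt_le, exp_pos).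
          rewrite <- (Rmult_1_r (E * _)). apply Rmult_le_compat. apply Rlt_le, exp_pos. apply Rabs_pos.
          unfold E. rewrite <- exp_plus. apply exp_le_mono. unfold Pa. rewrite Hc.
          generalize (Rle_abs A) (Rle_abs (- A)); rewrite Rabs_Ropp; intros.
          assert (t * t * t <= s * s * s).
          { destruct Ht as [Ht1 Ht2]. assert (T1 : t * t <= s * s) by nra.
            assert (T2 : t * t * t <= s * s * t) by nra. assert (T3 : s * s * t <= s * s * s) by nra. lra. }
          nra.
          apply Rabs_sin. }
        generalize (K b eq_refl) (K (- b) ltac:(ring)). lra.
        rewrite RInt_scalR. 
        apply Rle_trans with (2 * E * / (b * b)). apply Rmult_le_compat_l. lra.
        apply RInt_exp_lin. nra. lra. right; field; nra.
        apply ex_RInt_contR; intros; apply contD; auto_derive; auto. }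
      assert (Bb : 2 * E / (b * b) < eps).
      { apply Rmult_lt_reg_l with (b * b). nra.
        replace (b * b * (2 * E / (b * b))) with (2 * E) by (field; nra).
        assert (Hq : 2 * E / eps < b) by lra.
        apply Rmult_lt_compat_l with (r := eps) in Hq; [|lra].
        replace (eps * (2 * E / eps)) with (2 * E) in Hq by (field; lra). nra. }
      apply Rabs_def2 in HM. apply Rabs_le_between in Bw.
      apply Rabs_def1; lra. }
    apply is_lim_unique in Hlim.
    unfold Ai. rewrite Hlim. simpl.
    replace (2 * PI * (/ PI * (L / 2))) with L. exact HL.
    field. generalize PI_RGT_0; lra.
Qed.

Lemma param_cont (g : R -> R -> R) a b k0 : (forall x k, continuity_2d_pt g x k) ->
  continuous (fun k => RInt (fun x => g x k) a b) k0.
Proof.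
  intros Hg.
  assert (Ex : forall k a b, ex_RInt (fun x => g x k) a b).
  { intros; apply ex_RInt_contR; intros; apply cont2_fst; auto. }
  apply continuity_pt_filterlim.
  intros eps Heps.
  set (e' := eps / (Rabs (b - a) + 1)).
  assert (He' : 0 < e') by (apply Rdiv_lt_0_compat; [lra | generalize (Rabs_pos (b - a)); lra]).
  destruct (uniform_continuity_2d_1d g (Rmin a b) (Rmax a b) k0 ltac:(intros; auto) (mkposreal e' He')) as [d Hd].
  exists d; split. apply cond_pos.
  intros k [_ Hk]. simpl in *. unfold Rdist in *.
  rewrite <- RInt_minusR by auto.
  eapply Rle_lt_trans. apply RInt_bound_const with (M := e').
  apply ex_RInt_minusR; auto.
  intros t Ht. left. generalize (cond_pos d); intro Pd. apply Rabs_def2 in Hk.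
  apply Hd; auto; try lra; try (rewrite Rminus_diag, Rabs_R0; lra).
  unfold e'. apply Rmult_lt_reg_r with (Rabs (b - a) + 1). generalize (Rabs_pos (b - a)); lra.
  replace (Rabs (b - a) * (eps / (Rabs (b - a) + 1)) * (Rabs (b - a) + 1)) with (Rabs (b - a) * eps)
    by (field; generalize (Rabs_pos (b - a)); lra).
  generalize (Rabs_pos (b - a)); nra.
Qed.

Lemma fubini_fin (g : R -> R -> R) a b c d : (forall x k, continuity_2d_pt g x k) ->
  RInt (fun x => RInt (fun k => g x k) c d) a b = RInt (fun k => RInt (fun x => g x k) a b) c d.
Proof.
  intros Hg.
  assert (Hgs : forall k x, continuity_2d_pt (fun k x => g x k) k x) by (intros; apply cont2_swap; auto).
  assert (Exk : forall x c d, ex_RInt (fun k => g x k) c d).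
  { intros; apply ex_RInt_contR; intros; apply cont2_snd; auto. }
  assert (Exx : forall k a b, ex_RInt (fun x => g x k) a b).
  { intros; apply ex_RInt_contR; intros; apply cont2_fst; auto. }
  set (C k := RInt (fun x => g x k) a b).
  assert (CC : forall k, continuous C k) by (intros; apply param_cont; auto).
  assert (ExC : forall c d, ex_RInt C c d) by (intros; apply ex_RInt_contR; auto).
  set (G x d := RInt (fun k => g x k) c d).
  assert (CG : forall d x, continuous (fun x => G x d) x).
  { intros d0 x. unfold G. apply (param_cont (fun k x => g x k)). auto. }
  assert (DG : forall x d, is_derive (fun d => G x d) d (g x d)).
  { intros x d0. unfold G. apply (is_derive_RInt (fun k => g x k) (RInt (fun k => g x k) c) c).
    apply filter_forall; intros; apply (RInt_correct (V:=R_CompleteNormedModule)); auto.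
    apply cont2_snd; auto. }
  set (F1 d := RInt (fun x => G x d) a b).
  set (F2 d := RInt C c d).
  assert (D1 : forall d, is_derive F1 d (RInt (fun x => g x d) a b)).
  { intros d0. unfold F1.
    rewrite (RInt_extR (fun x => g x d0) (fun x => Derive (fun u => G x u) d0)) by (intros; symmetry; apply is_derive_unique; auto).
    apply (is_derive_RInt_param (fun d x => G x d)).
    - apply filter_forall. intros; eexists; apply DG.
    - intros t _. apply continuity_2d_pt_ext with (fun u v => g v u).
      intros; symmetry; apply is_derive_unique; auto.
      apply cont2_swap; auto.
    - apply filter_forall. intros; apply ex_RInt_contR; intros; apply CG. }
  assert (D2 : forall d, is_derive F2 d (C d)).
  { intros d0. unfold F2. apply (is_derive_RInt C (RInt C c) c).
    apply filter_forall; intros; apply (RInt_correct (V:=R_CompleteNormedModule)); auto. auto. }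
  assert (D3 : forall d, is_derive (fun d => F1 d - F2 d) d 0).
  { intros d0. assert (X := is_derive_minus _ _ _ _ _ (D1 d0) (D2 d0)).
    unfold minus, plus, opp in X; simpl in X. unfold C in X.
    replace 0 with (RInt (fun x => g x d0) a b + - RInt (fun x => g x d0) a b) by ring. exact X. }
  assert (Hc : F1 c - F2 c = 0).
  { unfold F1, F2, G. rewrite RInt_point.
    rewrite (RInt_extR (fun x => RInt (fun k => g x k) c c) (fun x => 0)) by (intros; rewrite RInt_point; reflexivity).
    rewrite RInt_constR. unfold zero; simpl. ring. }
  assert (Hd : F1 d - F2 d = F1 c - F2 c).
  { destruct (Rtotal_order d c) as [Hl|[He|Hgt]].
    - apply (eq_is_derive (fun d => F1 d - F2 d)); [intros t _; exact (D3 t)|lra].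
    - rewrite He; reflexivity.
    - symmetry. apply (eq_is_derive (fun d => F1 d - F2 d)); [intros t _; exact (D3 t)|lra]. }
  unfold F1, F2, G, C in *. rfix. lra.
Qed.

Lemma IR_partial_le h I a b : (forall x, 0 <= h x) -> IR h I -> a <= b -> RInt h a b <= I.
Proof.
  intros Hh HI Hab.
  assert (T := IR_tail h h I I 1 a b HI HI ltac:(lra) ltac:(intros; rewrite Rabs_right by (apply Rle_ge; auto); lra) Hab).
  apply Rabs_le_between in T. lra.
Qed.

Lemma fubini_IR (g : R -> R -> R) (h1 h2 A B : R -> R) I1 I2 L :
  (forall x k, continuity_2d_pt g x k) ->
  (forall x, 0 <= h1 x) -> (forall k, 0 <= h2 k) ->
  (forall x k, Rabs (g x k) <= h1 x * h2 k) ->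
  IR h1 I1 -> IR h2 I2 ->
  (forall x, IR (fun k => g x k) (A x)) -> (forall k, IR (fun x => g x k) (B k)) ->
  IR B L -> IR A L.
Proof.
  intros Hg Hh1 Hh2 Hb IR1 IR2 HA HB HL.
  assert (Hgs : forall k x, continuity_2d_pt (fun k x => g x k) k x) by (intros; apply cont2_swap; auto).
  assert (Exk : forall x c d, ex_RInt (fun k => g x k) c d).
  { intros; apply ex_RInt_contR; intros; apply cont2_snd; auto. }
  assert (Exx : forall k a b, ex_RInt (fun x => g x k) a b).
  { intros; apply ex_RInt_contR; intros; apply cont2_fst; auto. }
  assert (I2p : 0 <= I2).
  { apply Rle_trans with (RInt h2 0 0). rewrite RInt_point; unfold zero; simpl; lra.
    apply IR_partial_le; auto; lra. }
  assert (Key : forall a1 a2, a1 <= a2 -> exists If, is_RInt A a1 a2 If /\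
             Rabs (If - L) <= I2 * (I1 - RInt h1 a1 a2)).
  { intros a1 a2 Ha.
    destruct (ex_RInt_ub h1 a1 a2 (proj1 IR1 a1 a2)) as [M1 HM1].
    set (cl x := Rmax a1 (Rmin a2 x)).
    assert (Hcl : forall x, a1 <= x <= a2 -> cl x = x).
    { intros x Hx; unfold cl. rewrite Rmin_right by lra. rewrite Rmax_right by lra. auto. }
    assert (Hcl2 : forall x, a1 <= cl x <= a2).
    { intros x; unfold cl. split. apply Rmax_l. apply Rmax_lub. lra. apply Rmin_l. }
    assert (HM1' : forall x, h1 (cl x) <= Rabs M1).
    { intros x. eapply Rle_trans. 2: apply Rle_abs.
      eapply Rle_trans. apply Rle_abs. apply (HM1 (cl x)). rewrite Rmin_left, Rmax_right by lra. auto. }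
    set (fK (K : R) (x : R) := RInt (fun k => g (cl x) k) (- K) K).
    set (hK (K : R) := RInt (fun x => RInt (fun k => g x k) (- K) K) a1 a2).
    assert (Hf : forall K, is_RInt (fK K) a1 a2 (hK K)).
    { intros K. apply (is_RInt_ext (fun x => RInt (fun k => g x k) (- K) K)).
      intros x Hx. unfold fK. rewrite Hcl; auto. rewrite Rmin_left, Rmax_right in Hx by lra. lra.
      apply (RInt_correct (V:=R_CompleteNormedModule)). apply ex_RInt_contR. intros z.
      apply (param_cont (fun k x => g x k)). auto. }
    assert (Hu : filterlim fK (Rbar_locally p_infty) (locally (fun x => A (cl x)))).
    { apply (proj2 (@filterlim_locally _ (fct_UniformSpace R R_UniformSpace) (Rbar_locally p_infty) _ fK (fun x => A (cl x)))). intros eps.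
      assert (H2 := proj2 IR2). destruct (H2 (eps / (Rabs M1 + 1))) as [K0 HK0].
      { apply Rdiv_lt_0_compat. apply cond_pos. generalize (Rabs_pos M1); lra. }
      exists (Rabs K0). intros K HK t.
      change (Rabs (fK K t - A (cl t)) < eps).
      generalize (Rle_abs K0) (Rle_abs (- K0)); rewrite Rabs_Ropp; intros.
      assert (T := IR_tail (fun k => g (cl t) k) h2 (A (cl t)) I2 (h1 (cl t)) (- K) K (HA (cl t)) IR2 (Hh1 _)
                    (fun k => Hb (cl t) k) ltac:(lra)).
      specialize (HK0 (- K) K ltac:(lra) ltac:(lra)).
      assert (P := IR_partial_le h2 I2 (- K) K Hh2 IR2 ltac:(lra)).
      unfold fK. rewrite <- Rabs_Ropp. replace (- (RInt (fun k => g (cl t) k) (- K) K - A (cl t))) with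
        (A (cl t) - RInt (fun k => g (cl t) k) (- K) K) by ring.
      eapply Rle_lt_trans. exact T.
      apply Rabs_def2 in HK0.
      assert (Pe := cond_pos eps). assert (PM := Rabs_pos M1).
      apply Rle_lt_trans with (Rabs M1 * (eps / (Rabs M1 + 1))).
      apply Rmult_le_compat; auto; lra.
      apply Rmult_lt_reg_r with (Rabs M1 + 1). lra.
      replace (Rabs M1 * (eps / (Rabs M1 + 1)) * (Rabs M1 + 1)) with (Rabs M1 * eps) by (field; lra). nra. }
    destruct (filterlim_RInt fK a1 a2 (Rbar_locally p_infty) _ (fun x => A (cl x)) hK Hf Hu) as [If [HIf1 HIf2]].
    exists If. split.
    - apply (is_RInt_ext (fun x => A (cl x))); auto.
      intros x Hx. rewrite Hcl; auto. rewrite Rmin_left, Rmax_right in Hx by lra. lra.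
    - set (tau := I1 - RInt h1 a1 a2).
      assert (Htau : 0 <= tau) by (unfold tau; generalize (IR_partial_le h1 I1 a1 a2 Hh1 IR1 Ha); lra).
      set (C k := RInt (fun x => g x k) a1 a2).
      assert (CC : forall k, continuous C k) by (intros; apply param_cont; auto).
      assert (HCB : forall k, Rabs (C k - B k) <= tau * h2 k).
      { intros k. rewrite <- Rabs_Ropp. replace (- (C k - B k)) with (B k - C k) by ring.
        rewrite Rmult_comm. apply (IR_tail (fun x => g x k) h1 (B k) I1 (h2 k) a1 a2 (HB k) IR1 (Hh2 k)).
        intros; rewrite Rmult_comm; auto. auto. }
      assert (HhK : forall K, hK K = RInt C (- K) K).
      { intros K. unfold hK, C. apply fubini_fin; auto. }
      assert (HBK : forall K, 0 <= K -> Rabs (hK K - RInt B (- K) K) <= tau * I2).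
      { intros K HK0. rewrite HhK. rewrite <- RInt_minusR.
        2: apply ex_RInt_contR; auto. 2: apply (proj1 HL).
        eapply Rle_trans. apply RInt_abs_le with (h := fun k => tau * h2 k). lra.
        apply ex_RInt_minusR. apply ex_RInt_contR; auto. apply (proj1 HL).
        apply ex_RInt_scalR. apply (proj1 IR2).
        intros; auto.
        rewrite RInt_scalR by apply (proj1 IR2). apply Rmult_le_compat_l; auto.
        apply IR_partial_le; auto. lra. }
      apply Rnot_lt_le. intro Hlt.
      set (del := (Rabs (If - L) - tau * I2) / 3).
      assert (Hdel : 0 < del) by (unfold del; lra).
      assert (HIf1' := proj1 (@filterlim_locally _ R_UniformSpace (Rbar_locally p_infty) _ hK If) HIf1).
      destruct (HIf1' (mkposreal del Hdel)) as [M HM].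
      destruct (proj2 HL del Hdel) as [M' HM'].
      set (K := Rabs M + Rabs M' + 1).
      generalize (Rle_abs M) (Rle_abs M') (Rabs_pos M) (Rabs_pos M'); intros.
      specialize (HM K ltac:(unfold K; lra)). change (Rabs (hK K - If) < del) in HM.
      specialize (HM' (- K) K ltac:(unfold K; lra) ltac:(unfold K; lra)).
      specialize (HBK K ltac:(unfold K; lra)).
      assert (T : Rabs (If - L) <= Rabs (hK K - If) + Rabs (hK K - RInt B (- K) K) + Rabs (RInt B (- K) K - L)).
      { replace (If - L) with (- (hK K - If) + (hK K - RInt B (- K) K) + (RInt B (- K) K - L)) by ring.
        eapply Rle_trans. apply Rabs_triang. rewrite <- (Rabs_Ropp (hK K - If)).
        apply Rplus_le_compat_r. apply Rabs_triang. }
      unfold del in *. lra. }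
  split.
  - intros a b. destruct (Rle_dec a b) as [Hab|Hab].
    + destruct (Key a b Hab) as [If [HI _]]. exists If; auto.
    + destruct (Key b a ltac:(lra)) as [If [HI _]]. apply ex_RInt_swap. exists If; auto.
  - intros eps Heps.
    destruct (proj2 IR1 (eps / (I2 + 1))) as [M HM]. apply Rdiv_lt_0_compat; lra.
    exists (Rabs M). intros a b Ha Hb2.
    generalize (Rle_abs M) (Rle_abs (- M)); rewrite Rabs_Ropp; intros.
    destruct (Key a b ltac:(generalize (Rabs_pos M); lra)) as [If [HI HIL]].
    assert (HI2 : RInt A a b = If) by (apply (is_RInt_unique (V:=R_CompleteNormedModule)); exact HI). rewrite HI2.
    specialize (HM a b ltac:(lra) ltac:(lra)).
    assert (Hq : Rabs (RInt h1 a b - I1) < eps / (I2 + 1)) by exact HM.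
    apply Rabs_def2 in Hq.
    eapply Rle_lt_trans. exact HIL.
    apply Rle_lt_trans with (I2 * (eps / (I2 + 1))).
    apply Rmult_le_compat_l; lra.
    apply Rmult_lt_reg_r with (I2 + 1). lra.
    replace (I2 * (eps / (I2 + 1)) * (I2 + 1)) with (I2 * eps) by (field; lra). nra.
Qed.

Lemma phi_pos s x y : 0 < s -> 0 < phi_heat s x y.
Proof.
  intros Hs. unfold phi_heat. apply Rmult_lt_0_compat.
  apply Rinv_0_lt_compat, sqrt_lt_R0. generalize PI_RGT_0; nra. apply exp_pos.
Qed.

Lemma main_conv t s y : 0 < s ->
  IR (fun x => Ai_s t x * phi_heat s x y) (Ai_s (t + s) y).
Proof.
  intros Hs.
  set (T := t + s).
  set (g := fun x k => exp (2 * t ^ 3 / 3 + x * t) * ua (t ^ 2 + x) 1 k * phi_heat s x y).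
  set (C0 := exp (2 * t ^ 3 / 3 + 1 / 3 - t ^ 2)).
  set (h1 := fun x => C0 * (exp ((t - 1) * x) * cos (0 * x + 0) * phi_heat s x y)).
  set (h2 := fun k => exp (- (1 * (k * k)))).
  set (A := fun x => 2 * PI * (Ai_s t x * phi_heat s x y)).
  set (be := fun k => k ^ 3 / 3 - k + t ^ 2 * k).
  set (B := fun k => C0 * exp (- (k * k)) * (exp ((t - 1) * y + s * ((t - 1) * (t - 1) - k * k)) *
                cos (k * y + be k + 2 * s * (t - 1) * k))).
  assert (Hfub : IR A (2 * PI * Ai_s T y)).
  { apply (fubini_IR g h1 h2 A B (C0 * (exp ((t - 1) * y + s * ((t - 1) * (t - 1) - 0 * 0)) * cos (0 * y + 0 + 2 * s * (t - 1) * 0)))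
            (sqrt PI / sqrt 1)).
    - intros x k. unfold g, ua, Pa, Qa, phi_heat. c2; lra.
    - intros x. unfold h1. rewrite Rmult_0_l, Rplus_0_l, cos_0, Rmult_1_r.
      apply Rmult_le_pos. unfold C0; apply Rlt_le, exp_pos.
      apply Rmult_le_pos. apply Rlt_le, exp_pos. apply Rlt_le, phi_pos; auto.
    - intros k. unfold h2. apply Rlt_le, exp_pos.
    - intros x k. unfold g, h1, h2, ua. rewrite Rmult_0_l, Rplus_0_l, cos_0, Rmult_1_r.
      rewrite !Rabs_mult. rewrite (Rabs_right (exp (2 * _ / 3 + _))), (Rabs_right (exp (Pa _ _ _))), (Rabs_right (phi_heat _ _ _))
        by (apply Rle_ge, Rlt_le; try apply exp_pos; apply phi_pos; auto).
      assert (E : exp (2 * t ^ 3 / 3 + x * t) * exp (Pa (t ^ 2 + x) k 1) = C0 * exp ((t - 1) * x) * exp (- (1 * (k * k)))).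
      { unfold C0. rewrite <- !exp_plus. f_equal. unfold Pa. field. }
      generalize (Rabs_cos (Qa (t ^ 2 + x) k 1)) (exp_pos (2 * t ^ 3 / 3 + x * t)) (exp_pos (Pa (t ^ 2 + x) k 1))
        (phi_pos s x y Hs) (exp_pos (- (1 * (k * k)))) (exp_pos ((t - 1) * x)); intros.
      assert (HC0 : 0 < C0) by apply exp_pos.
      apply Rle_trans with (exp (2 * t ^ 3 / 3 + x * t) * exp (Pa (t ^ 2 + x) k 1) * phi_heat s x y).
      { set (e1 := exp (2 * t ^ 3 / 3 + x * t)) in *. set (e2 := exp (Pa (t ^ 2 + x) k 1)) in *.
        set (cc := Rabs (cos (Qa (t ^ 2 + x) k 1))) in *.
        apply Rmult_le_compat_r. lra.
        rewrite <- Rmult_assoc. rewrite <- (Rmult_1_r (e1 * e2)) at 2. apply Rmult_le_compat_l; nra. }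
      rewrite E. right; ring.
    - unfold h1. apply IR_scal. apply heat_gauss; auto.
    - apply IR_gauss_scaled; lra.
    - intros x. unfold A, g.
      apply IR_ext with (fun k => (exp (2 * t ^ 3 / 3 + x * t) * phi_heat s x y) * ua (t ^ 2 + x) 1 k).
      intros; ring.
      replace (2 * PI * (Ai_s t x * phi_heat s x y)) with ((exp (2 * t ^ 3 / 3 + x * t) * phi_heat s x y) * (2 * PI * Ai (t ^ 2 + x))).
      apply IR_scal. apply Ai_IR; lra.
      unfold Ai_s. replace (x * t) with (t * x) by ring. ring.
    - intros k. unfold B, g.
      apply IR_ext with (fun x => (C0 * exp (- (k * k))) * (exp ((t - 1) * x) * cos (k * x + be k) * phi_heat s x y)).
      { intros x. unfold ua, C0, be.
        replace (cos (k * x + (k ^ 3 / 3 - k + t ^ 2 * k))) with (cos (Qa (t ^ 2 + x) k 1)) by (f_equal; unfold Qa; field).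
        replace (exp (2 * t ^ 3 / 3 + x * t)) with (exp (2 * t ^ 3 / 3 + 1 / 3 - t ^ 2) * exp (- (k * k)) * exp ((t - 1) * x) * / exp (Pa (t ^ 2 + x) k 1)).
        field. apply Rgt_not_eq, exp_pos.
        rewrite <- !exp_plus, <- exp_Ropp, <- exp_plus. f_equal. unfold Pa. field. }
      apply IR_scal. apply heat_gauss; auto.
    - apply IR_ext with (fun k => exp (2 * T ^ 3 / 3 + y * T) * ua (T ^ 2 + y) (1 + s) k).
      { intros k. unfold B, ua, C0, be, T.
        replace (cos (Qa ((t + s) ^ 2 + y) k (1 + s))) with (cos (k * y + (k ^ 3 / 3 - k + t ^ 2 * k) + 2 * s * (t - 1) * k))
          by (f_equal; unfold Qa; field).
        rewrite <- !Rmult_assoc. f_equal. rewrite <- !exp_plus. f_equal. unfold Pa. field. }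
      unfold Ai_s.
      replace (2 * PI * (exp (2 * T ^ 3 / 3 + y * T) * Ai (T ^ 2 + y))) with (exp (2 * T ^ 3 / 3 + y * T) * (2 * PI * Ai (T ^ 2 + y))) by ring.
      apply IR_scal. apply Ai_IR; lra. }
  unfold A in Hfub.
  change (Ai_s (t + s) y) with (Ai_s T y). replace (Ai_s T y) with (/ (2 * PI) * (2 * PI * Ai_s T y)) by (field; generalize PI_RGT_0; lra).
  apply IR_ext with (fun x => / (2 * PI) * (2 * PI * (Ai_s t x * phi_heat s x y))).
  intros; field; generalize PI_RGT_0; lra.
  apply IR_scal; auto.
Qed.

Lemma half (F : R -> R) L : IR F L ->
  is_RInt_gen (fun w => F w + F (- w)) (Rbar_locally m_infty) (at_point 0) L.
Proof.
  intros [H1 H2].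
  intros P [eps HP].
  destruct (H2 eps (cond_pos eps)) as [M HM].
  apply (Filter_prod _ _ _ (fun a => a < - Rabs M) (fun b => b = 0)).
  - exists (- Rabs M). auto.
  - reflexivity.
  - intros a b Ha Hb. simpl. subst b.
    exists (RInt (fun w => F w + F (- w)) a 0). split.
    apply (RInt_correct (V:=R_CompleteNormedModule)).
    apply ex_RInt_plusR; auto. apply ex_RInt_comp_oppR; auto.
    apply HP.
    rewrite RInt_plusR by (auto; apply ex_RInt_comp_oppR; auto).
    rewrite RInt_comp_oppR by auto. rewrite Ropp_0.
    rewrite (RInt_swapR F 0 (- a)) by auto. rewrite Ropp_involutive.
    rewrite RInt_ChaslesR by auto.
    generalize (Rle_abs M) (Rle_abs (- M)); rewrite Rabs_Ropp; intros.
    specialize (HM a (- a) ltac:(lra) ltac:(lra)).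
    change (Rabs (RInt F a (- a) - L) < eps). exact HM.
Qed.

Lemma phi_sym1 s w v : phi_heat s (- w) v = phi_heat s w (- v).
Proof. unfold phi_heat. f_equal. f_equal. f_equal. f_equal. ring. Qed.
Lemma phi_sym2 s w v : phi_heat s (- w) (- v) = phi_heat s w v.
Proof. unfold phi_heat. f_equal. f_equal. f_equal. f_equal. ring. Qed.
Lemma phi_sym3 s w v : phi_heat s w v = phi_heat s v w.
Proof. unfold phi_heat. f_equal. f_equal. f_equal. f_equal. ring. Qed.
Lemma phi_sym4 s w v : phi_heat s w (- v) = phi_heat s v (- w).
Proof. unfold phi_heat. f_equal. f_equal. f_equal. f_equal. ring. Qed.

Lemma assemble (a a2 : R -> R) s c v : 0 < s ->
  (forall y, IR (fun x => a x * phi_heat s x y) (a2 y)) ->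
  is_RInt_gen (fun w => (a (c + w) - a (c - w)) * (phi_heat s w v - phi_heat s w (- v)))
    (Rbar_locally m_infty) (at_point 0) (a2 (c + v) - a2 (c - v)).
Proof.
  intros Hs Ha.
  assert (Hs1 : forall v', IR (fun w => a (c + w) * phi_heat s w v') (a2 (c + v'))).
  { intros v'. assert (X := IR_comp_lin _ _ 1 c ltac:(lra) (Ha (c + v'))).
    rewrite Rdiv_1_r in X. revert X. apply IR_ext. intros w.
    replace (1 * w + c) with (c + w) by ring. f_equal. unfold phi_heat. f_equal. f_equal. f_equal. f_equal. ring. }
  assert (HF := IR_minus _ _ _ _ (Hs1 v) (Hs1 (- v))).
  replace (c + - v) with (c - v) in HF by ring.
  assert (X := half _ _ HF).
  assert (E : (fun w => a (c + w) * phi_heat s w v - a (c + w) * phi_heat s w (- v) +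
                (a (c + - w) * phi_heat s (- w) v - a (c + - w) * phi_heat s (- w) (- v))) =
              (fun w => (a (c + w) - a (c - w)) * (phi_heat s w v - phi_heat s w (- v)))).
  { apply FunctionalExtensionality.functional_extensionality. intros w.
    rewrite phi_sym1, phi_sym2. replace (c + - w) with (c - w) by ring. ring. }
  cbv beta in X. rewrite E in X. exact X.
Qed.

Theorem proposition7p3 (Rc t1 t2 : R) (Ht : t1 < t2) :
  forall xi zeta u v : R, u <= 0 -> v <= 0 ->
    is_RInt_gen (fun w => Phi Rc xi t1 w * T0 t1 t2 w v)
      (Rbar_locally m_infty) (at_point 0) (Phi Rc xi t2 v) /\
    is_RInt_gen (fun w => T0 t1 t2 u w * Psi Rc zeta t2 w)
      (Rbar_locally m_infty) (at_point 0) (Psi Rc zeta t1 u).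
Proof.
  intros xi zeta u v Hu Hv.
  assert (Hs : 0 < t2 - t1) by lra.
  split.
  - unfold Phi, T0.
    apply (assemble (Ai_s t1) (Ai_s t2) (t2 - t1) (Rc + xi) v Hs).
    intros y. assert (X := main_conv t1 (t2 - t1) y Hs). replace (t1 + (t2 - t1)) with t2 in X by ring. exact X.
  - unfold Psi, T0.
    assert (E : (fun w => (phi_heat (t2 - t1) u w - phi_heat (t2 - t1) u (- w)) *
                   (Ai_s (- t2) (Rc + zeta + w) - Ai_s (- t2) (Rc + zeta - w))) =
                (fun w => (Ai_s (- t2) (Rc + zeta + w) - Ai_s (- t2) (Rc + zeta - w)) *
                   (phi_heat (t2 - t1) w u - phi_heat (t2 - t1) w (- u)))).
    { apply FunctionalExtensionality.functional_extensionality. intros w.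
      rewrite (phi_sym3 _ u w), (phi_sym4 _ u w). ring. }
    rewrite E.
    apply (assemble (Ai_s (- t2)) (Ai_s (- t1)) (t2 - t1) (Rc + zeta) u Hs).
    intros y. assert (X := main_conv (- t2) (t2 - t1) y Hs). replace (- t2 + (t2 - t1)) with (- t1) in X by ring. exact X.
Qed.
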